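(* Let $K_{n_1,n_2}$ be the complete bipartite graph with parts $V_1,V_2$, where $n_1=|V_1|\ge 2$ and $n_2=|V_2|\ge 2$. Then the clique number of the 1-skeleton of its cut polytope satisfies $$\omega(\mathrm{CUT}(K_{n_1,n_2}))\ge 2^{\min\{n_1,n_2\}-1}.$$
   Context: For an undirected graph $G=(V,E)$ and $S\subseteq V$, $\delta(S)\subseteq E$ denotes the set of edges with exactly one endpoint in $S$, and $\mathbf v(S)\in\{0,1\}^{E}$ is its incidence vector ($v(S)_e=1$ iff $e\in\delta(S)$). The cut polytope is $\mathrm{CUT}(G)=\operatorname{conv}\{\mathbf v(S):S\subseteq V\}\subset\mathbb R^{E}$. The 1-skeleton of a polytope is the graph whose vertices are the polytope's vertices and whose edges are its one-dimensional faces; $\omega$ denotes its clique number. *)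

(* Defs.v *)
From HB Require Import structures.
From mathcomp Require Import all_boot all_order all_algebra.
From mathcomp Require Import reals.
Set Implicit Arguments. Unset Strict Implicit. Unset Printing Implicit Defensive.
Import Order.TTheory GRing.Theory Num.Theory.
Local Open Scope ring_scope.

Definition dotv (R : realType) (E : finType) (c x : {ffun E -> R}) : R :=
  \sum_(e : E) c e * x e.

Definition in_segment (R : realType) (E : finType) (u v p : {ffun E -> R}) : Prop :=
  exists t : R, 0 <= t /\ t <= 1 /\ forall e, p e = t * u e + (1 - t) * v e.

Definition is_vertex (R : realType) (E : finType) (P : {ffun E -> R} -> Prop)
    (p : {ffun E -> R}) : Prop :=
  P p /\ exists c : {ffun E -> R},
    forall q, P q -> dotv c q <= dotv c p /\ (dotv c q = dotv c p -> q = p).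

(* u v span a 1-dimensional face (edge) of conv(P): some linear functional c
   is maximized over P exactly on points of the segment [u,v] (including u,v);
   the face conv(P ∩ argmax c) is then the segment [u,v], with u <> v. *)
Definition skel_adj (R : realType) (E : finType) (P : {ffun E -> R} -> Prop)
    (u v : {ffun E -> R}) : Prop :=
  is_vertex P u /\ is_vertex P v /\ u <> v /\
  exists c : {ffun E -> R}, dotv c u = dotv c v /\
    forall q, P q -> dotv c q <= dotv c u /\ (dotv c q = dotv c u -> in_segment u v q).

Definition skel_clique (R : realType) (E : finType) (P : {ffun E -> R} -> Prop)
    (Q : seq {ffun E -> R}) : Prop :=
  uniq Q /\ (forall q, q \in Q -> is_vertex P q) /\
  (forall u v, u \in Q -> v \in Q -> u <> v -> skel_adj P u v).

(* Complete bipartite graph K_{n1,n2}: vertex set 'I_n1 + 'I_n2 (V1 = inl, V2 = inr),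
   edge set 'I_n1 * 'I_n2, edge (i,j) joining inl i and inr j. *)
Definition Kvert (n1 n2 : nat) := ('I_n1 + 'I_n2)%type.
Definition Kedge (n1 n2 : nat) := ('I_n1 * 'I_n2)%type.

Definition cutvec (R : realType) (n1 n2 : nat) (S : {set Kvert n1 n2}) :
    {ffun Kedge n1 n2 -> R} :=
  [ffun e : Kedge n1 n2 =>
     if (inl e.1 \in S) != (inr e.2 \in S) then (1 : R) else 0].

Definition cutpts (R : realType) (n1 n2 : nat) (x : {ffun Kedge n1 n2 -> R}) : Prop :=
  exists S : {set Kvert n1 n2}, x = cutvec R S.

(* Main.v *)
Require Import Defs.
From HB Require Import structures.
From mathcomp Require Import all_boot all_order all_algebra.
From mathcomp Require Import reals.
From mathcomp Require Import lra zify.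
Set Implicit Arguments. Unset Strict Implicit. Unset Printing Implicit Defensive.
Import Order.TTheory GRing.Theory Num.Theory.
Local Open Scope ring_scope.

Definition cb n1 n2 (S : {set Kvert n1 n2}) (e : Kedge n1 n2) : bool :=
  (inl e.1 \in S) != (inr e.2 \in S).

Lemma cutvecE (R : realType) n1 n2 (S : {set Kvert n1 n2}) e :
  cutvec R S e = if cb S e then 1 else 0.
Proof. by rewrite ffunE. Qed.

Definition wfun (R : realType) n1 n2 (S : {set Kvert n1 n2}) (w : Kedge n1 n2 -> bool)
  : {ffun Kedge n1 n2 -> R} :=
  [ffun e => if w e then (if cb S e then 1 else -1) else 0].

Lemma key (R : realType) n1 n2 (S X : {set Kvert n1 n2}) w :
  dotv (wfun R S w) (cutvec R X) <= dotv (wfun R S w) (cutvec R S) /\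
  (dotv (wfun R S w) (cutvec R X) = dotv (wfun R S w) (cutvec R S) ->
     forall e, w e -> cb X e = cb S e).
Proof.
have Hd : dotv (wfun R S w) (cutvec R S) - dotv (wfun R S w) (cutvec R X) =
   \sum_e (wfun R S w e * cutvec R S e - wfun R S w e * cutvec R X e).
  by rewrite /dotv -sumrB.
have Hpos : forall e, true -> 0 <= wfun R S w e * cutvec R S e - wfun R S w e * cutvec R X e.
  move=> e _; rewrite !cutvecE ffunE.
  by case: (w e); case: (cb S e); case: (cb X e) => /=; lra.
split.
  by rewrite -subr_ge0 Hd; apply: sumr_ge0.
move=> Heq e we.
have /eqP : \sum_e (wfun R S w e * cutvec R S e - wfun R S w e * cutvec R X e) = 0.
  by rewrite -Hd Heq subrr.
rewrite psumr_eq0 // => /allP /(_ e (mem_index_enum e)) /= /eqP.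
rewrite !cutvecE ffunE we.
by case: (cb S e); case: (cb X e) => //=; lra.
Qed.

Lemma vertex (R : realType) n1 n2 (S : {set Kvert n1 n2}) :
  is_vertex (@cutpts R n1 n2) (cutvec R S).
Proof.
split; first by exists S.
exists (wfun R S (fun _ => true)) => q [X ->].
have [h1 h2] := key R S X (fun _ => true).
split=> // /h2 H; apply/ffunP => e; by rewrite !cutvecE (H e).
Qed.

Lemma step (s1 s2 t1 t2 r1 r2 : bool) :
  ((s1 != s2) == (t1 != t2) -> (r1 != r2) = (s1 != s2)) ->
  s1 (+) t1 = s2 (+) t2 -> r1 (+) s1 = r2 (+) s2.
Proof. by case: s1 s2 t1 t2 r1 r2 => [] [] [] [] [] [] //= /(_ isT). Qed.

Lemma stepA (a b r1 s1 t1 r2 s2 t2 : bool) : a = b ->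
  r1 (+) s1 = (if s1 (+) t1 then b else a) -> r2 (+) s2 = (if s2 (+) t2 then b else a) ->
  (r1 != r2) = (s1 != s2).
Proof. by move=> ->; case: s1; case: s2; case: t1; case: t2; case: r1; case: r2; case: b. Qed.

Lemma stepB (a b r1 s1 t1 r2 s2 t2 : bool) : a != b ->
  r1 (+) s1 = (if s1 (+) t1 then b else a) -> r2 (+) s2 = (if s2 (+) t2 then b else a) ->
  (r1 != r2) = (t1 != t2).
Proof. by case: s1; case: s2; case: t1; case: t2; case: r1; case: r2; case: b; case: a. Qed.

Lemma cut_eq_cb (R : realType) n1 n2 (S T : {set Kvert n1 n2}) e :
  cutvec R S = cutvec R T -> cb S e = cb T e.
Proof.
move/ffunP/(_ e); rewrite !cutvecE.
by case: (cb S e); case: (cb T e) => //= /eqP; rewrite ?oner_eq0 // eq_sym oner_eq0.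
Qed.

Lemma adj (R : realType) n1 n2 (S T : {set Kvert n1 n2}) i0 j0 i1 j1 :
  (inl i0 \in S) (+) (inl i0 \in T) = false ->
  (inr j0 \in S) (+) (inr j0 \in T) = false ->
  (inl i1 \in S) (+) (inl i1 \in T) = true ->
  (inr j1 \in S) (+) (inr j1 \in T) = true ->
  skel_adj (@cutpts R n1 n2) (cutvec R S) (cutvec R T).
Proof.
move=> h0 h1 h2 h3.
split; first exact: vertex. split; first exact: vertex. split.
  move/(cut_eq_cb (i0, j1)); rewrite /cb /=.
  by move: h0 h3; case: (inl i0 \in S); case: (inl i0 \in T);
     case: (inr j1 \in S); case: (inr j1 \in T).
exists (wfun R S (fun e => cb S e == cb T e)); split.
  rewrite /dotv; apply: eq_bigr => e _; rewrite !cutvecE ffunE.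
  by case: eqP => [->|_]; rewrite ?mul0r.
move=> q [X ->].
have [k1 k2] := key R S X (fun e => cb S e == cb T e).
split=> // /k2 H.
pose pi x := (x \in X) (+) (x \in S).
pose de x := (x \in S) (+) (x \in T).
have P : forall i j, de (inl i) = de (inr j) -> pi (inl i) = pi (inr j).
  move=> i j; apply: step; exact: (H (i, j)).
pose a := pi (inl i0); pose b := pi (inl i1).
have hr : forall j, pi (inr j) = if de (inr j) then b else a.
  move=> j; case E: (de (inr j)); symmetry; apply: P.
    by rewrite E /de h2.
  by rewrite E /de h0.
have hl : forall i, pi (inl i) = if de (inl i) then b else a.
  move=> i; case E: (de (inl i)).
    by rewrite (P i j1) ?hr /de ?h3 // E h3.
  by rewrite (P i j0) ?hr /de ?h1 // E h1.
have [Eab|Nab] := eqVneq a b.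
  exists 1; split; first lra; split; first lra.
  move=> e; rewrite subrr mul0r addr0 mul1r !cutvecE /cb.
  case: e => i j /=.
  by rewrite (stepA Eab (hl i) (hr j)).
exists 0; split; first lra; split; first lra.
move=> e; rewrite mul0r add0r subr0 mul1r !cutvecE /cb.
case: e => i j /=.
by rewrite (stepB Nab (hl i) (hr j)).
Qed.

Definition idx n1 n2 (x : Kvert n1 n2) : nat :=
  match x with inl i => val i | inr j => val j end.

Definition lab k n1 n2 (b : {ffun 'I_k -> bool}) (x : Kvert n1 n2) : bool :=
  [exists p : 'I_k, ((val p).+1 == idx x) && b p].

Definition Sx k n1 n2 (b : {ffun 'I_k -> bool}) : {set Kvert n1 n2} :=
  [set x | lab b x].

Lemma lab0 k n1 n2 (b : {ffun 'I_k -> bool}) (x : Kvert n1 n2) :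
  idx x = 0%N -> (x \in Sx n1 n2 b) = false.
Proof. by rewrite inE => h; apply/existsP => -[p /andP[/eqP]]; rewrite h. Qed.

Lemma labS k n1 n2 (b : {ffun 'I_k -> bool}) (x : Kvert n1 n2) p :
  idx x = (val p).+1 -> (x \in Sx n1 n2 b) = b p.
Proof.
rewrite inE => h; apply/existsP/idP => [[p' /andP[/eqP h' bp]]|bp].
  by have -> : p = p' by apply: val_inj; apply/eqP; rewrite -eqSS -h -h'.
by exists p; rewrite h eqxx.
Qed.

Theorem theorem9 (R : realType) (n1 n2 : nat) :
  (2 <= n1)%N -> (2 <= n2)%N ->
  exists Q : seq {ffun Kedge n1 n2 -> R},
    skel_clique (@cutpts R n1 n2) Q /\ size Q = (2 ^ (minn n1 n2).-1)%N.
Proof.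
move=> hn1 hn2.
have h01 : (0 < n1)%N by lia.
have h02 : (0 < n2)%N by lia.
have hk1 : forall p : 'I_(minn n1 n2).-1, ((val p).+1 < n1)%N.
  move=> p; have : (val p < (minn n1 n2) - 1)%N by rewrite subn1; exact: ltn_ord.
  lia.
have hk2 : forall p : 'I_(minn n1 n2).-1, ((val p).+1 < n2)%N.
  move=> p; have : (val p < (minn n1 n2) - 1)%N by rewrite subn1; exact: ltn_ord.
  lia.
pose f := fun b : {ffun 'I_(minn n1 n2).-1 -> bool} => cutvec R (Sx n1 n2 b).
have finj : injective f.
  move=> b b' /(cut_eq_cb) H; apply/ffunP => p.
  have := H (Ordinal h01, Ordinal (hk2 p)).
  by rewrite /cb /= !(@lab0 _ _ _ _ (inl (Ordinal h01))) // !(@labS _ _ _ _ (inr (Ordinal (hk2 p))) p) //;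
    case: (b p); case: (b' p).
exists (map f (enum {ffun 'I_(minn n1 n2).-1 -> bool})); split; last first.
  by rewrite size_map -cardE card_ffun card_bool card_ord.
split; first by rewrite map_inj_uniq // enum_uniq.
split; first by move=> q /mapP [b _ ->]; exact: vertex.
move=> u v /mapP [b _ ->] /mapP [b' _ ->] Nuv.
have [p Hp] : exists p, b p != b' p.
  case: (pickP (fun p => b p != b' p)) => [p Hp|H]; first by exists p.
  by exfalso; apply: Nuv; congr f; apply/ffunP => p; move: (H p) => /= /negbFE /eqP.
apply: (@adj R n1 n2 _ _ (Ordinal h01) (Ordinal h02) (Ordinal (hk1 p)) (Ordinal (hk2 p))).
- by rewrite !(@lab0 _ _ _ _ (inl (Ordinal h01))).
- by rewrite !(@lab0 _ _ _ _ (inr (Ordinal h02))).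
- by rewrite !(@labS _ _ _ _ (inl (Ordinal (hk1 p))) p) //; move: Hp; case: (b p); case: (b' p).
- by rewrite !(@labS _ _ _ _ (inr (Ordinal (hk2 p))) p) //; move: Hp; case: (b p); case: (b' p).
Qed.
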